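(* Let $d,e\in\mathbb{Z}^+$ with $e\in\{1,\dots,d-1\}$, let $B\subseteq\mathbb{R}^2$ and $D\subseteq B$. (i) If $\alpha_e(D)\ge0$, then there is $C\in\mathcal{C}_{\le e}$ with $\psi_e^{-1}(V_e(D))\subseteq C$. (ii) If $\beta_e(B,D)\ge -1$, then there is $C\in\mathcal{C}_{\le d-e}$ with $\psi_{d-e}^{-1}(W_e(B,D))\subseteq C$. (iii) If $|B|\le\binom{d+2}{2}-1$, then there is $C\in\mathcal{C}_{\le d}$ with $\psi_d^{-1}(V_d(B))\subseteq C$. (iv) If $|B|\le\binom{d+2}{2}-1$, then there are $C_1\in\mathcal{C}_{\le e}$, $C_2\in\mathcal{C}_{\le d-e}$, $C_3\in\mathcal{C}_{\le d}$ with $U_e(B,D)\subseteq C_1\cup C_2\cup C_3$.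
   Context: For $k\in\mathbb{Z}^+$, a curve of degree $k$ is the zero set in $\mathbb{R}^2$ of a polynomial in $\mathbb{R}[x,y]$ of degree exactly $k$; $\mathcal{C}_k$ is the family of such curves and $\mathcal{C}_{\le k}:=\bigcup_{j=1}^k\mathcal{C}_j$. For $k\in\mathbb{Z}^+$ let $I_k=\{(i,j)\in\mathbb{Z}_{\ge 0}^2: 1\le i+j\le k\}$ and $\psi_k:\mathbb{R}^2\to\mathbb{R}^{\binom{k+2}{2}-1}$, $\psi_k(a_1,a_2)=(a_1^ia_2^j)_{(i,j)\in I_k}$. A flat is an affine subspace; $\mathrm{Fl}(S)$ is the affine hull of $S$ ($\mathrm{Fl}(\emptyset)=\emptyset$, $\dim\emptyset=-1$). With $d$ fixed, for $e\in\{1,\dots,d-1\}$, $B\subseteq\mathbb{R}^2$, $D\subseteq B$: $V_e(D):=\mathrm{Fl}(\psi_e(D))\subseteq\mathbb{R}^{\binom{e+2}{2}-1}$; $W_e(B,D):=\mathrm{Fl}\big(\psi_{d-e}(B\setminus\psi_e^{-1}(V_e(D)))\big)\subseteq\mathbb{R}^{\binom{d-e+2}{2}-1}$; $\alpha_e(D):=\binom{e+2}{2}-2-\dim V_e(D)$; $\beta_e(B,D):=\binom{d-e+2}{2}-3-\dim W_e(B,D)$; and $U_e(B,D):=\psi_d^{-1}(V_d(B))$ if $\alpha_e(D)<0$; $U_e(B,D):=\psi_d^{-1}(V_d(B))\cup\psi_e^{-1}(V_e(D))$ if $\beta_e(B,D)<0\le\alpha_e(D)$; $U_e(B,D):=\psi_d^{-1}(V_d(B))\cup\psi_e^{-1}(V_e(D))\cup\psi_{d-e}^{-1}(W_e(B,D))$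 if $\alpha_e(D),\beta_e(B,D)\ge0$. Here $V_d(B):=\mathrm{Fl}(\psi_d(B))$. *)

(* Defs.v *)
From HB Require Import structures.
From mathcomp Require Import all_boot all_order all_algebra.
From mathcomp Require Import boolp reals.
From mathcomp Require Import mpoly.

Import Order.TTheory GRing.Theory Num.Theory.
Local Open Scope ring_scope.

Section Defs.
Context {R : realType}.

Definition Ik (k : nat) := {p : 'I_k.+1 * 'I_k.+1 | (0 < p.1 + p.2 <= k)%N}.

(* the ambient space R^{binom(k+2,2)-1}, with coordinates indexed by I_k *)
Notation Vk k := {ffun Ik k -> R^o}.

Definition psi (k : nat) (a : R * R) : Vk k :=
  [ffun p : Ik k => a.1 ^+ (val p).1 * a.2 ^+ (val p).2].

Definition Fl k (S : Vk k -> Prop) : Vk k -> Prop := fun x =>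
  exists n (p : 'I_n -> Vk k) (c : 'I_n -> R),
    (forall i, S (p i)) /\ \sum_i c i = 1 /\ x = \sum_i c i *: p i.

Definition lin_indep k n (v : 'I_n -> Vk k) : Prop :=
  forall c : 'I_n -> R, \sum_i c i *: v i = 0 -> forall i, c i = 0.

(* dimension of an affine flat F: -1 if F is empty, otherwise the dimension
   of its direction space {a - b | a, b in F} (= maximal size of a linearly
   independent family in it; such families have size <= #|{: Ik k}|) *)
Definition has_indep_dir k (F : Vk k -> Prop) (n : nat) : Prop :=
  exists v : 'I_n -> Vk k, lin_indep k n v /\
    forall i, exists a b, F a /\ F b /\ v i = a - b.

Definition dimF k (F : Vk k -> Prop) : int :=
  if `[< exists x, F x >] then
    ((\max_(n < #|{: Ik k}|.+1 | `[< has_indep_dir k F n >]) n)%N)%:Z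
  else -1.

Definition image_psi k (S : R * R -> Prop) : Vk k -> Prop :=
  fun y => exists a, S a /\ y = psi k a.

Definition preim_psi k (F : Vk k -> Prop) : R * R -> Prop :=
  fun a => F (psi k a).

Definition Vset e (D : R * R -> Prop) : Vk e -> Prop := Fl e (image_psi e D).

Definition Wset d e (B D : R * R -> Prop) : Vk (d - e) -> Prop :=
  Fl (d - e) (image_psi (d - e) (fun a => B a /\ ~ preim_psi e (Vset e D) a)).

Definition alpha e (D : R * R -> Prop) : int :=
  ('C(e + 2, 2))%:Z - 2 - dimF e (Vset e D).

Definition beta d e (B D : R * R -> Prop) : int :=
  ('C(d - e + 2, 2))%:Z - 3 - dimF (d - e) (Wset d e B D).

Definition Uset d e (B D : R * R -> Prop) : R * R -> Prop := fun a =>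
  if alpha e D < 0 then preim_psi d (Vset d B) a
  else if beta d e B D < 0 then
    preim_psi d (Vset d B) a \/ preim_psi e (Vset e D) a
  else preim_psi d (Vset d B) a \/ preim_psi e (Vset e D) a
       \/ preim_psi (d - e) (Wset d e B D) a.

Definition pt (a : R * R) : 'I_2 -> R := fun i => if val i == 0%N then a.1 else a.2.

Definition tdeg (p : {mpoly R[2]}) : nat := (msize p).-1.

Definition zeroset (p : {mpoly R[2]}) : R * R -> Prop := fun a => p.@[pt a] = 0.

Definition curve_of_deg (k : nat) (C : R * R -> Prop) : Prop :=
  exists p : {mpoly R[2]}, p != 0 /\ tdeg p = k /\ forall a, C a <-> zeroset p a.

Definition curve_le (k : nat) (C : R * R -> Prop) : Prop :=
  exists j, (1 <= j <= k)%N /\ curve_of_deg j C.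

Definition card_le (B : R * R -> Prop) (m : nat) : Prop :=
  exists s : seq (R * R), (size s <= m)%N /\ forall a, B a -> a \in s.

End Defs.

(* Main.v *)
Require Import Defs.
From HB Require Import structures.
From mathcomp Require Import all_boot all_order all_algebra.
From mathcomp Require Import boolp reals.
From mathcomp Require Import mpoly.
Import Order.TTheory GRing.Theory Num.Theory.
Local Open Scope ring_scope.
From mathcomp Require Import zify.

Lemma inner_sum (i k n : nat) :
  (\sum_(0 <= j < n) (if i + j <= k then 1 else 0) = minn n (k.+1 - i))%N.
Proof.
elim: n => [|n IH]; first by rewrite big_nil min0n.
rewrite big_nat_recr //= IH.
case: leqP => h; lia.
Qed.

Lemma tri (k : nat) : (\sum_(0 <= i < k) (k - i) = 'C(k.+1, 2))%N.
Proof.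
elim: k => [|k IH]; first by rewrite big_nil.
rewrite big_nat_recl // subn0.
rewrite (eq_bigr (fun i => k - i)%N); last by move=> i _; rewrite subSS.
by rewrite IH [in RHS]binS bin1 addnC.
Qed.

Lemma card_Ik (k : nat) : #|{: Ik k}| = ('C(k.+2, 2) - 1)%N.
Proof.
rewrite card_sig.
pose T := [pred p : 'I_k.+1 * 'I_k.+1 | (p.1 + p.2 <= k)%N].
have hT : #|T| = 'C(k.+2, 2).
  rewrite -sum1_card big_mkcond /=.
  rewrite -(pair_big xpredT xpredT (fun (i j : 'I_k.+1) => if (i + j <= k)%N then 1%N else 0%N)) /=.
  transitivity (\sum_(i < k.+1) (k.+1 - i))%N.
    apply: eq_bigr => i _.
    rewrite -(big_mkord xpredT (fun j => if (i + j <= k)%N then 1%N else 0%N)).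
    rewrite inner_sum; apply/minn_idPr; exact: leq_subr.
  by rewrite -(big_mkord xpredT (fun i => k.+1 - i)%N) tri.
rewrite (cardD1 (ord0, ord0)) inE /= in hT.
rewrite -hT addnC addnK; apply: eq_card => [[i j]]; rewrite !inE /=.
rewrite xpair_eqE -!val_eqE /=.
case: (i : nat) => [|i']; case: (j : nat) => [|j'] //=.
Qed.

Section LA.
Variable R : realType.
Variable k : nat.
Local Notation V := {ffun Ik k -> R^o}.

Lemma dimV : dim V = #|{: Ik k}|.
Proof. by rewrite /dim /= muln1. Qed.

Definition dotv (w v : V) : R^o := \sum_q w q * v q.
Lemma dotv_lin w : linear (dotv w).
Proof.
move=> a u v; rewrite /dotv /= scaler_sumr -big_split; apply: eq_bigr => q _.
rewrite !ffunE /= mulrDr; congr (_ + _).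
by rewrite /GRing.scale /= mulrCA.
Qed.
HB.instance Definition _ w := GRing.isLinear.Build R V R^o *:%R (dotv w) (dotv_lin w).

Lemma dotvC w v : dotv w v = dotv v w.
Proof. by apply: eq_bigr => q _; rewrite mulrC. Qed.

Definition dotX (X : seq V) (w : V) : {ffun 'I_(size X) -> R^o} :=
  [ffun i : 'I_(size X) => dotv X`_i w].
Lemma dotX_lin X : linear (dotX X).
Proof. by move=> a u v; apply/ffunP => i; rewrite !ffunE linearP. Qed.
HB.instance Definition _ X := GRing.isLinear.Build R V _ *:%R (dotX X) (dotX_lin X).

Lemma Fl_single (S : V -> Prop) z : S z -> Fl k S z.
Proof.
move=> Sz; exists 1%N, (fun _ => z), (fun _ => 1); split; first by [].
by rewrite !big_ord1 scale1r.
Qed.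

Lemma Fl_empty (S : V -> Prop) : (forall z, ~ S z) -> forall x, ~ Fl k S x.
Proof.
move=> hS x [[|n] [p [c [hp [hc _]]]]].
  by move: hc; rewrite big_ord0 => /eqP; rewrite eq_sym oner_eq0.
exact: (hS _ (hp ord0)).
Qed.

Lemma Fl_diff (S : V -> Prop) s0 (U : {vspace V}) :
  (forall z, S z -> z - s0 \in U) -> forall x, Fl k S x -> x - s0 \in U.
Proof.
move=> hS x [n [p [c [hp [hc ->]]]]].
have -> : s0 = \sum_i c i *: s0 by rewrite -scaler_suml hc scale1r.
rewrite -sumrB; apply: memv_suml => i _; rewrite -scalerBr.
by apply: memvZ; apply: hS.
Qed.

Lemma dim_bound (S : V -> Prop) s0 (t : seq V) :
  (forall z, S z -> z - s0 \in <<t>>%VS) ->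
  forall n, has_indep_dir k (Fl k S) n -> (n <= size t)%N.
Proof.
move=> hS n [v [li hv]].
have hv' : forall i, v i \in <<t>>%VS.
  move=> i; have [a [b [Fa [Fb ->]]]] := hv i.
  have -> : a - b = (a - s0) - (b - s0) by rewrite opprB addrA subrK.
  by apply: memvB; [exact: (@Fl_diff S s0 _ hS _ Fa) | exact: (@Fl_diff S s0 _ hS _ Fb)].
pose T := [tuple v i | i < n].
have freeT : free T.
  apply/freeP => c hc; apply: li; rewrite -[RHS]hc; apply: eq_bigr => i _.
  by rewrite -tnth_nth tnth_mktuple.
have <- : size T = n by rewrite size_tuple.
rewrite -(eqP freeT); apply: leq_trans (dim_span t); apply: dimvS.
by apply/span_subvP => x /tnthP [i ->]; rewrite tnth_mktuple.
Qed.

Lemma dimF_le (S : V -> Prop) s0 (t : seq V) :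
  (forall z, S z -> z - s0 \in <<t>>%VS) ->
  (dimF k (Fl k S) <= (size t)%:Z)%R.
Proof.
move=> hS; rewrite /dimF; case: asboolP => _ //.
rewrite lez_nat; apply/bigmax_leqP => i /asboolP; exact: (@dim_bound S s0 t hS).
Qed.

Lemma lemA (S : V -> Prop) s0 :
  (dimF k (Fl k S) < (#|{: Ik k}|)%:Z)%R -> S s0 ->
  exists w : V, w != 0 /\ forall x, Fl k S x -> dotv w x = dotv w s0.
Proof.
move=> hdim Ss0.
pose P n := `[< exists X : seq V, [/\ size X == n, free X &
   forall x, x \in X -> exists z, S z /\ x = z - s0] >].
have P0 : exists n, P n.
  exists 0%N; apply/asboolP; exists [::]; split => //.
  by rewrite /free span_nil dimv0.
have Pb : forall n, P n -> (n <= \dim (fullv : {vspace V}))%N.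
  move=> n /asboolP [X [/eqP <- fX _]].
  by rewrite -(eqP fX); apply: dimvS; apply: subvf.
case: (ex_maxnP P0 Pb) => n /asboolP [X [/eqP sX fX hX]] maxn.
have spanX : forall z, S z -> z - s0 \in <<X>>%VS.
  move=> z Sz; apply/idPn => hz.
  have : P n.+1.
    apply/asboolP; exists (z - s0 :: X); split.
    - by rewrite /= sX.
    - by rewrite free_cons hz fX.
    - move=> x; rewrite in_cons => /orP [/eqP -> | /hX //].
      by exists z.
  by move/maxn; rewrite ltnn.
have Fls0 : Fl k S s0 by apply: Fl_single.
have sXlt : (size X < #|{: Ik k}|)%N.
  move: hdim; rewrite /dimF asboolT; last by exists s0.
  rewrite ltz_nat; apply: leq_ltn_trans.
  have hle : (size X < #|{: Ik k}|.+1)%N.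
    by rewrite ltnS -dimV -dimvf -(eqP fX); apply: dimvS; apply: subvf.
  apply: (leq_bigmax_cond (Ordinal hle) (F := fun i : 'I__ => nat_of_ord i)).
  apply/asboolP; exists (fun i => X`_i); split.
    move=> c hc; exact: (elimT (freeP (X := in_tuple X)) fX c hc).
  move=> i; have [z [Sz ->]] := hX _ (mem_nth 0 (ltn_ord i)).
  by exists z, s0; split; [exact: Fl_single|].
pose f := linfun (dotX X).
have hker : (0 < \dim (lker f))%N.
  have := limg_ker_dim f fullv; rewrite capfv dimvf dimV.
  have : (\dim (f @: fullv) <= size X)%N.
    apply: leq_trans (dimvS (subvf _)) _.
    by rewrite dimvf /dim /= muln1 card_ord.
  lia.
pose w := vpick (lker f).
have wnz : w != 0 by rewrite vpick0 -dimv_eq0 -lt0n.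
have hw : forall i : 'I_(size X), dotv X`_i w = 0.
  move=> i; have := memv_pick (lker f); rewrite memv_ker lfunE /= => /eqP /ffunP /(_ i).
  by rewrite !ffunE.
have hwX : (<<X>> <= lker (linfun (dotv w)))%VS.
  apply/span_subvP => x xX; rewrite memv_ker lfunE /=.
  have hi : (index x X < size X)%N by rewrite index_mem.
  have := hw (Ordinal hi); rewrite /= nth_index // dotvC => ->.
  by [].
exists w; split => // x Fx.
have := @Fl_diff S s0 _ spanX _ Fx => /(subvP hwX); rewrite memv_ker lfunE /= linearB /=.
by rewrite subr_eq0 => /eqP.
Qed.

Definition mon (q : Ik k) : 'X_{1..2} :=
  [multinom (if i == ord0 then val (val q).1 else val (val q).2) | i < 2].

Definition Pw (w : V) (c : R) : {mpoly R[2]} :=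
  \sum_q w q *: 'X_[mon q] + c%:MP.

Lemma Pw_eval w c a : (Pw w c).@[pt a] = dotv w (psi k a) + c.
Proof.
rewrite /Pw mevalD mevalC; congr (_ + _).
rewrite raddf_sum; apply: eq_bigr => q _.
rewrite /= mevalZ mevalX big_ord_recl big_ord1 !mnmE /= ffunE.
by rewrite /pt /=.
Qed.

Lemma mdeg_mon q : mdeg (mon q) = (val (val q).1 + val (val q).2)%N.
Proof. by rewrite mdegE big_ord_recl big_ord1 !mnmE. Qed.

Lemma mon_inj : injective mon.
Proof.
move=> q1 q2 h.
have h0 := congr1 (fun m : 'X_{1..2} => m ord0) h.
have h1 := congr1 (fun m : 'X_{1..2} => m (Ordinal (isT : (1 < 2)%N))) h.
rewrite /= !mnmE /= in h0 h1.
apply/val_inj; clear h; move: h0 h1; case: q1 => [[a1 b1] p1]; case: q2 => [[a2 b2] p2] /=.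
by move=> /val_inj -> /val_inj ->.
Qed.

Lemma Pw_coef w c q : (Pw w c)@_(mon q) = w q.
Proof.
rewrite /Pw mcoeffD mcoeffC.
have -> : (mon q == 0%MM) = false.
  rewrite -mdeg_eq0 mdeg_mon; apply/negbTE; rewrite -lt0n.
  by case/andP: (valP q).
rewrite mulr0 addr0 raddf_sum (bigD1 q) //= mcoeffZ mcoeffX eqxx mulr1.
rewrite big1 ?addr0 // => q' hq'; rewrite mcoeffZ mcoeffX.
by rewrite (inj_eq mon_inj) (negbTE hq') mulr0.
Qed.

Lemma Pw_size w c : (msize (Pw w c) <= k.+1)%N.
Proof.
apply: leq_trans (msizeD_le _ _) _; rewrite geq_max; apply/andP; split.
  apply: leq_trans (msize_sum _ _ _) _; apply/bigmax_leqP => q _.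
  apply: leq_trans (msizeZ_le _ _) _; rewrite msizeX mdeg_mon ltnS.
  by case/andP: (valP q).
by rewrite msizeC; case: (c != 0).
Qed.

Lemma Pw_curve w c : w != 0 -> curve_le k (zeroset (Pw w c)).
Proof.
move=> wnz.
have [q hq] : exists q, w q != 0.
  apply/existsP; apply: contraR wnz => /existsPn h.
  by apply/eqP/ffunP => q; rewrite ffunE; apply/eqP; have := h q; rewrite negbK.
have hs : (mdeg (mon q) < msize (Pw w c))%N.
  by apply: msize_mdeg_lt; rewrite mcoeff_msupp Pw_coef.
have h1 : (0 < mdeg (mon q))%N by rewrite mdeg_mon; case/andP: (valP q).
have h2 := Pw_size w c.
exists (tdeg (Pw w c)); split; first by rewrite /tdeg; apply/andP; split; lia.
exists (Pw w c); split => //.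
by rewrite -msize_poly_eq0; lia.
Qed.

Lemma filler : (0 < k)%N -> exists C : R * R -> Prop, curve_le k C.
Proof.
move=> k0; have : (0 < #|{: Ik k}|)%N by rewrite card_Ik; case: k k0 => // k' _; rewrite !binS bin1 bin0; lia.
case/card_gt0P => q _.
exists (zeroset (Pw [ffun _ => 1] 0)); apply: Pw_curve.
by apply/eqP => /ffunP /(_ q); rewrite !ffunE; apply/eqP; rewrite oner_eq0.
Qed.

Lemma curveA (S : V -> Prop) : (0 < k)%N ->
  (dimF k (Fl k S) < (#|{: Ik k}|)%:Z)%R ->
  exists C, curve_le k C /\ forall a, Fl k S (psi k a) -> C a.
Proof.
move=> k0 hd; case: (pselect (exists z, S z)) => [[s0 Ss0]|nS].
  have [w [wnz hw]] := @lemA S s0 hd Ss0.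
  exists (zeroset (Pw w (- dotv w s0))); split; first exact: Pw_curve.
  by move=> a /hw; rewrite /zeroset Pw_eval => ->; rewrite subrr.
have [C hC] := filler k0; exists C; split => // a hF; exfalso.
by apply: (@Fl_empty S _ _ hF) => z Sz; apply: nS; exists z.
Qed.
End LA.

Theorem lemma21 (R : realType) (d e : nat) (B D : R * R -> Prop) :
  (1 <= e)%N -> (e <= d - 1)%N -> (forall a, D a -> B a) ->
  [/\ (0 <= alpha e D ->
         exists C, curve_le e C /\ forall a, preim_psi e (Vset e D) a -> C a),
      (-1 <= beta d e B D ->
         exists C, curve_le (d - e) C /\
           forall a, preim_psi (d - e) (Wset d e B D) a -> C a),
      (card_le B ('C(d + 2, 2) - 1) ->
         exists C, curve_le d C /\ forall a, preim_psi d (Vset d B) a -> C a)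
    & (card_le B ('C(d + 2, 2) - 1) ->
         exists C1 C2 C3, [/\ curve_le e C1, curve_le (d - e) C2, curve_le d C3
           & forall a, Uset d e B D a -> C1 a \/ C2 a \/ C3 a])].
Proof.
move=> e1 ed DB.
have de : (0 < d - e)%N by lia.
have d0 : (0 < d)%N by lia.
have pI : 0 <= alpha e D ->
    exists C, curve_le e C /\ forall a, preim_psi e (Vset e D) a -> C a.
  move=> ha; apply: (@curveA R e (image_psi e D) e1).
  rewrite card_Ik; move: ha; rewrite /alpha addn2.
  have : (1 <= 'C(e.+2, 2))%N by rewrite bin_gt0.
  rewrite /Vset; lia.
have pII : -1 <= beta d e B D ->
    exists C, curve_le (d - e) C /\
      forall a, preim_psi (d - e) (Wset d e B D) a -> C a.
  move=> hb; apply: (@curveA R (d - e) _ de).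
  rewrite card_Ik; move: hb; rewrite /beta /Wset addn2.
  have : (1 <= 'C((d - e).+2, 2))%N by rewrite bin_gt0.
  lia.
have pIII : card_le B ('C(d + 2, 2) - 1) ->
    exists C, curve_le d C /\ forall a, preim_psi d (Vset d B) a -> C a.
  move=> [s [ss hs]]; apply: (@curveA R d (image_psi d B) d0).
  have hC : (1 <= 'C(d.+2, 2))%N by rewrite bin_gt0.
  rewrite card_Ik; move: ss; rewrite addn2 => ss.
  case: (pselect (exists a, B a)) => [[a0 Ba0]|nB].
    pose t := [seq psi d x - psi d a0 | x <- s & x != a0].
    have ht : forall z, image_psi d B z -> z - psi d a0 \in <<t>>%VS.
      move=> z [x [Bx ->]]; case: (eqVneq x a0) => [->|xa].
        by rewrite subrr mem0v.
      by apply: memv_span; apply: map_f; rewrite mem_filter xa hs.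
    have := @dimF_le R d _ _ _ ht.
    have : (size t < size s)%N.
      rewrite size_map size_filter -(count_predC (fun x => x != a0) s) -addn1 leq_add2l.
      rewrite -has_count; apply/hasP; exists a0; first exact: hs.
      by rewrite /= negbK.
    clearbody t; move: (dimF d _) => x h1 h2. case: x h2 => n; rewrite ?lez_nat ?ltz_nat => h2.
    - by have h3 : (n < size s)%N := leq_ltn_trans h2 h1; lia.
    - by [].
  have := @dimF_le R d (image_psi d B) 0 [::] (fun z hz => False_ind _ (nB (let: ex_intro a ha := hz in ex_intro _ a (proj1 ha)))).
  have hC2 : (2 <= 'C(d.+2, 2))%N by rewrite binS bin1; lia.
  move: (dimF d _) => x; case: x => n //; rewrite lez_nat ltz_nat /= => h2; lia.
split => //.
move=> hB; have [C3 [c3 h3]] := pIII hB.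
have [C1 c1] := @filler R e e1; have [C2 c2] := @filler R (d - e) de.
rewrite /Uset; case: ltP => ha.
  by exists C1, C2, C3; split => // a ?; right; right; apply: h3.
have [C1' [c1' h1']] := pI ha.
case: ltP => hb.
  exists C1', C2, C3; split => // a [?|?]; [right; right; exact: h3 | left; exact: h1'].
have [C2' [c2' h2']] := pII (le_trans (lerN10 _) hb).
exists C1', C2', C3; split => // a [?|[?|?]];
  [right; right; exact: h3 | left; exact: h1' | right; left; exact: h2'].
Qed.
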